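(* Let $\phi_*\in(0,\pi/2)$, $R\ge r=1$, and consider the billiard map $F$ on $Q(\phi_*,R)$. Let $x\in M_r$ with $n_1\ge1$, and assume that $p(F^{-1}x_0)\in\Gamma_r$ and $p(Fx_2)\in\Gamma_r$. Let $\tau_0=|p(x_0)p(x_1)|$, $\tau_1=|p(F^{n_1}x_1)p(x_2)|$ and $p=\frac{n_1}{n_1+1}$. If $$\tau_0<\tfrac23 d_0+p\,d_1\quad\text{and}\quad \tau_1<p\,d_1+\tfrac23 d_2,$$ then the orbit segment $(F^{-1}x_0,x_0,x_1,\dots,F^{n_1}x_1,x_2,Fx_2)$ is positively defocusing.
   Context: Setting: $r=1$, $Q(\phi_*,R)=D(O_r,r)\cap D(O_R,R)$ with $|O_rO_R|=\sqrt{R^2-r^2\sin^2\phi_*}-r\cos\phi_*$; boundary arcs $\Gamma_r\subset\partial D(O_r,r)$ (position angles $[\phi_*,2\pi-\phi_*]$) and $\Gamma_R\subset\partial D(O_R,R)$. Phase space $M=M_r\sqcup M_R$, coordinates $(\phi,\theta)$ with $\theta\in(0,\pi)$ the angle from the positive tangent direction; $p(x)$ the base point; $F$ the billiard map. $M_r^{out}=M_r\cap F^{-1}(M_R)$, $M_R^{out}=M_R\cap F^{-1}(M_r)$. For $x\in M_r$: $x_0=F^{n_0}x$ with $n_0=\inf\{n\ge0:F^nx\in M_r^{out}\}$, $x_1=Fx_0$, $n_1=\inf\{n\ge0:F^nx_1\in M_R^{out}\}$, $x_2=F^{n_1+1}x_1$; $d_0=r\sin\theta(x_0)$, $d_1=R\sin\theta(x_1)$,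 $d_2=r\sin\theta(x_2)$. Derivative: $D_xF=\frac1{d(Fx)}\begin{bmatrix}\tau-d(x)&\tau\\ \tau-d(x)-d(Fx)&\tau-d(Fx)\end{bmatrix}$ with $d(x)=\rho\sin\theta$ ($\rho$ the radius of the arc of $p(x)$), $\tau=|p(x)p(Fx)|$. A segment $(F^kx)_{m\le k\le n}$ is positively defocusing if all four entries of $D_{F^mx}F^{n-m}$ in $(\phi,\theta)$ coordinates are positive. *)

(* Defs.v *)
From Stdlib Require Import Reals Lra Lia.
Open Scope R_scope.

(* Coordinates: O_r = (0,0), O_R = (-|O_r O_R|, 0), so that the corners are
   (cos phi_star, +- sin phi_star), Gamma_r = position angles [phi_star, 2pi - phi_star]
   on the unit circle, Gamma_R = position angles [-psi_star, psi_star] on the big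
   circle, with R sin psi_star = sin phi_star. Both arcs oriented counterclockwise. *)

Inductive arc : Type := Arc_r | Arc_R.

(* a phase point: the arc carrying its base point, position angle phi on
   that arc's circle, angle theta from the positive tangent direction *)
Record phase : Type := mkPhase { ph_arc : arc; ph_phi : R; ph_theta : R }.

Definition dist_centers (phis Rb : R) : R :=
  sqrt (Rb ^ 2 - (sin phis) ^ 2) - cos phis.

Definition psis (phis Rb : R) : R := asin (sin phis / Rb).

Definition radius (Rb : R) (a : arc) : R :=
  match a with Arc_r => 1 | Arc_R => Rb end.

Definition center (phis Rb : R) (a : arc) : R * R :=
  match a with Arc_r => (0, 0) | Arc_R => (- dist_centers phis Rb, 0) end.

Definition bpos (phis Rb : R) (x : phase) : R * R :=
  let c := center phis Rb (ph_arc x) in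
  (fst c + radius Rb (ph_arc x) * cos (ph_phi x),
   snd c + radius Rb (ph_arc x) * sin (ph_phi x)).

(* phase space M = M_r + M_R (corners excluded: F is not defined there) *)
Definition in_M (phis Rb : R) (x : phase) : Prop :=
  0 < ph_theta x < PI /\
  match ph_arc x with
  | Arc_r => phis < ph_phi x < 2 * PI - phis
  | Arc_R => - psis phis Rb < ph_phi x < psis phis Rb
  end.

Definition in_Q (phis Rb : R) (p : R * R) : Prop :=
  (fst p) ^ 2 + (snd p) ^ 2 <= 1 /\
  (fst p + dist_centers phis Rb) ^ 2 + (snd p) ^ 2 <= Rb ^ 2.

(* outgoing unit velocity of x (tangent rotated by theta towards the inside) *)
Definition vel (x : phase) : R * R :=
  (- sin (ph_phi x + ph_theta x), cos (ph_phi x + ph_theta x)).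

Definition normal (x : phase) : R * R := (cos (ph_phi x), sin (ph_phi x)).

Definition dot (u v : R * R) : R := fst u * fst v + snd u * snd v.

Definition reflect (v n : R * R) : R * R :=
  (fst v - 2 * dot v n * fst n, snd v - 2 * dot v n * snd n).

Definition edist (p q : R * R) : R :=
  sqrt ((fst p - fst q) ^ 2 + (snd p - snd q) ^ 2).

(* bstep x y  <->  y = F x (billiard map, as its graph) *)
Definition bstep (phis Rb : R) (x y : phase) : Prop :=
  in_M phis Rb x /\ in_M phis Rb y /\
  exists tau : R, 0 < tau /\
    bpos phis Rb y = (fst (bpos phis Rb x) + tau * fst (vel x),
                     snd (bpos phis Rb x) + tau * snd (vel x)) /\
    (forall t, 0 <= t <= tau ->
       in_Q phis Rb (fst (bpos phis Rb x) + t * fst (vel x),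
                     snd (bpos phis Rb x) + t * snd (vel x))) /\
    vel y = reflect (vel x) (normal y).

Definition dfun (Rb : R) (x : phase) : R := radius Rb (ph_arc x) * sin (ph_theta x).

Record mat2 : Type := mkMat2 { m11 : R; m12 : R; m21 : R; m22 : R }.

Definition mat2_id : mat2 := mkMat2 1 0 0 1.

Definition mat2_mul (A B : mat2) : mat2 :=
  mkMat2 (m11 A * m11 B + m12 A * m21 B) (m11 A * m12 B + m12 A * m22 B)
         (m21 A * m11 B + m22 A * m21 B) (m21 A * m12 B + m22 A * m22 B).

(* D_x F in (phi, theta) coordinates, for y = F x (formula of the paper) *)
Definition DF (phis Rb : R) (x y : phase) : mat2 :=
  let tau := edist (bpos phis Rb x) (bpos phis Rb y) in
  let dx := dfun Rb x in
  let dy := dfun Rb y in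
  mkMat2 ((tau - dx) / dy) (tau / dy) ((tau - dx - dy) / dy) ((tau - dy) / dy).

(* D_{s m} F^k along the orbit s (s (j+1) = F (s j)), by the chain rule *)
Fixpoint Dseg (phis Rb : R) (s : nat -> phase) (m k : nat) : mat2 :=
  match k with
  | O => mat2_id
  | S k' => mat2_mul (DF phis Rb (s (m + k')%nat) (s (m + k' + 1)%nat))
                     (Dseg phis Rb s m k')
  end.

Definition pos_defocusing (phis Rb : R) (s : nat -> phase) (m n : nat) : Prop :=
  let A := Dseg phis Rb s m (n - m) in
  0 < m11 A /\ 0 < m12 A /\ 0 < m21 A /\ 0 < m22 A.

(* the segment (F^{-1} x0 = y, x0 = o n0, ..., o (n0+n1+2) = x2, F x2 = z),
   indexed 0 .. n1+4 *)
Definition orbit_seg (y : phase) (o : nat -> phase) (n0 n1 : nat) (z : phase)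
  : nat -> phase :=
  fun k => match k with
           | O => y
           | S j => if (j <=? n1 + 2)%nat then o (n0 + j)%nat else z
           end.

(* Main.v *)
Require Import Defs.
From Stdlib Require Import Reals Lra Lia.
Open Scope R_scope.

Lemma negneg x y : x < 0 -> y < 0 -> 0 < x * y.
Proof. intros; nra. Qed.

Ltac fin b c X := match goal with |- 0 < ?e => replace e with (X/(b*c)) by
     (repeat match goal with H := _ |- _ => subst H end; field; lra) end;
     apply Rdiv_lt_0_compat; [|lra].

Lemma alg a b c s t n : 0 < a -> 0 < b -> 0 < c -> 1 <= n ->
  s < 2/3*a + n/(n+1)*b -> t < n/(n+1)*b + 2/3*c ->
  let B1 := mkMat2 ((s-a)/b) (s/b) ((s-a-b)/b) ((s-b)/b) in
  let P := mat2_mul B1 (mat2_mul (mkMat2 1 2 0 1) mat2_id) in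
  let Q := mkMat2 (m11 P + 2*n*m21 P) (m12 P + 2*n*m22 P) (m21 P) (m22 P) in
  let M := mat2_mul (mkMat2 1 2 0 1)
     (mat2_mul (mkMat2 ((t-b)/c) (t/c) ((t-b-c)/c) ((t-c)/c)) Q) in
  0 < m11 M /\ 0 < m12 M /\ 0 < m21 M /\ 0 < m22 M.
Proof.
  intros ha hb hc hn hs ht B1 P Q M.
  assert (hq : n/(n+1)*(n+1) = n) by (field; lra).
  assert (hs' : 3*(n+1)*s < 2*(n+1)*a + 3*n*b).
  { assert (H := Rmult_lt_compat_r (n+1) _ _ ltac:(lra) hs).
    assert (E: (2/3*a + n/(n+1)*b)*(n+1) = 2/3*a*(n+1) + n*b)
      by (field; lra). lra. }
  assert (ht' : 3*(n+1)*t < 3*n*b + 2*(n+1)*c).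
  { assert (H := Rmult_lt_compat_r (n+1) _ _ ltac:(lra) ht).
    assert (E: (n/(n+1)*b + 2/3*c)*(n+1) = n*b + 2/3*c*(n+1))
      by (field; lra). lra. }
  set (L11 := (n+1)*(s-a)-n*b). set (L12 := (n+1)*(3*s-2*a)-3*n*b).
  set (L21 := s-a-b). set (L22 := 3*s-2*a-3*b).
  set (U11 := 3*t-3*b-2*c). set (U12 := (n+1)*(3*t-2*c)-3*n*b).
  set (U21 := t-b-c). set (U22 := (n+1)*(t-c)-n*b).
  assert (l11 : L11 < 0) by (unfold L11; nra).
  assert (l12 : L12 < 0) by (unfold L12; nra).
  assert (l21 : L21 < 0) by (unfold L21; nra).
  assert (l22 : L22 < 0) by (unfold L22; nra).
  assert (u11 : U11 < 0) by (unfold U11; nra).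
  assert (u12 : U12 < 0) by (unfold U12; nra).
  assert (u21 : U21 < 0) by (unfold U21; nra).
  assert (u22 : U22 < 0) by (unfold U22; nra).
  assert (bc : 0 < b*c) by nra.
  subst M Q P B1; simpl.
  repeat split.
  - fin b c (U11*L11 + U12*L21). pose proof (negneg _ _ u11 l11); pose proof (negneg _ _ u12 l21); lra.
  - fin b c (U11*L12 + U12*L22). pose proof (negneg _ _ u11 l12); pose proof (negneg _ _ u12 l22); lra.
  - fin b c (U21*L11 + U22*L21). pose proof (negneg _ _ u21 l11); pose proof (negneg _ _ u22 l21); lra.
  - fin b c (U21*L12 + U22*L22). pose proof (negneg _ _ u21 l12); pose proof (negneg _ _ u22 l22); lra.
Qed.

Lemma radius_pos Rb a : 1 <= Rb -> 0 < radius Rb a.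
Proof. destruct a; simpl; lra. Qed.

Lemma dfun_pos phis Rb x : 1 <= Rb -> in_M phis Rb x -> 0 < dfun Rb x.
Proof.
  intros HR [[h1 h2] _]. unfold dfun.
  apply Rmult_lt_0_compat; [apply radius_pos; auto | apply sin_gt_0; auto].
Qed.

Lemma trig1 ph th : cos ph * (- sin (ph+th)) + sin ph * cos (ph+th) = - sin th.
Proof.
  rewrite sin_plus, cos_plus.
  assert (H := sin2_cos2 ph). unfold Rsqr in H.
  transitivity (-(sin th) * (sin ph * sin ph + cos ph * cos ph)); [ring | rewrite H; ring].
Qed.

Lemma unit1 u : sin u * sin u + cos u * cos u = 1.
Proof. assert (H := sin2_cos2 u). unfold Rsqr in H. exact H. Qed.

Lemma same_arc phis Rb x x' : 1 <= Rb -> bstep phis Rb x x' -> ph_arc x = ph_arc x' ->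
  DF phis Rb x x' = mkMat2 1 2 0 1 /\ dfun Rb x' = dfun Rb x.
Proof.
  intros HR Hb Ha.
  assert (hd : 0 < dfun Rb x) by (apply (dfun_pos phis); auto; apply Hb).
  destruct Hb as [Hx [Hx' [tau [Htau [Hpos [_ Hvel]]]]]].
  destruct x as [a ph th], x' as [a' ph' th']; simpl in *. subst a'.
  unfold DF, dfun in *; simpl in *.
  assert (hr := radius_pos Rb a HR).
  unfold bpos in *; simpl in *.
  set (rho := radius Rb a) in *.
  destruct (center phis Rb a) as [c1 c2]; simpl in *.
  injection Hpos as E1 E2.
  unfold vel, reflect, normal, dot in Hvel; simpl in Hvel.
  injection Hvel as V1 V2.
  set (C := cos ph) in *. set (S := sin ph) in *. set (C' := cos ph') in *. set (S' := sin ph') in *.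
  set (vx := - sin (ph + th)) in *. set (vy := cos (ph + th)) in *.
  assert (T1 : C*vx + S*vy = - sin th) by apply trig1.
  assert (T2 : C'*(- sin (ph'+th')) + S'*cos (ph'+th') = - sin th') by apply trig1.
  assert (U1 : S*S + C*C = 1) by apply unit1.
  assert (U2 : S'*S' + C'*C' = 1) by apply unit1.
  assert (U3 : vx*vx + vy*vy = 1) by (unfold vx, vy; rewrite <- (unit1 (ph+th)); ring).
  assert (F1 : rho*C' = rho*C + tau*vx) by lra.
  assert (F2 : rho*S' = rho*S + tau*vy) by lra.
  assert (Z : tau*(tau - 2*rho*sin th) =
     ((rho*C')*(rho*C') + (rho*S')*(rho*S') - rho*rho)
     - rho*rho*((S*S + C*C) - 1) - 2*rho*tau*((C*vx + S*vy) + sin th) - tau*tau*((vx*vx + vy*vy) - 1)).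
  { rewrite F1, F2; ring. }
  assert (W : (rho*C')*(rho*C') + (rho*S')*(rho*S') - rho*rho = rho*rho*((S'*S'+C'*C') - 1)) by ring.
  rewrite W, U1, U2, U3, T1 in Z.
  assert (Htau2 : tau = 2*rho*sin th).
  { assert (Z' : tau*(tau - 2*rho*sin th) = 0) by (rewrite Z; ring).
    destruct (Rmult_integral _ _ Z'); lra. }
  assert (Hk : sin th' = vx*C' + vy*S').
  { rewrite V1, V2 in T2.
    set (k := vx*C'+vy*S') in *.
    assert (T3 : C' * (vx - 2 * k * C') + S' * (vy - 2 * k * S') = k - 2*k*(S'*S'+C'*C')) by (unfold k; ring).
    rewrite U2 in T3. lra. }
  assert (Hk2 : rho * sin th' = rho * sin th).
  { rewrite Hk. transitivity (vx*(rho*C') + vy*(rho*S')); [ring|].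
    rewrite F1, F2.
    transitivity (rho*(C*vx+S*vy) + tau*(vx*vx+vy*vy)); [ring|].
    rewrite T1, U3. lra. }
  assert (Hed : edist (c1 + rho*C, c2 + rho*S) (c1 + rho*C', c2 + rho*S') = tau).
  { unfold edist; cbn [fst snd].
    replace ((c1 + rho * C - (c1 + rho * C')) ^ 2 + (c2 + rho * S - (c2 + rho * S')) ^ 2)
      with (tau^2) by (rewrite E1, E2; transitivity (tau^2*(vx*vx+vy*vy)); [rewrite U3; ring | ring]).
    apply sqrt_pow2; lra. }
  rewrite Hed, Hk2. split; [|reflexivity].
  assert (hs : 0 < sin th) by nra. rewrite Htau2. f_equal; field; repeat split; lra.
Qed.

Lemma Dseg_S phis Rb s m k : Dseg phis Rb s m (S k) =
  mat2_mul (DF phis Rb (s (m+k)%nat) (s (S (m+k)))) (Dseg phis Rb s m k).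
Proof. simpl. rewrite Nat.add_1_r. reflexivity. Qed.

Theorem mainTheorem9 (phis Rb : R) (o : nat -> phase) (n0 n1 : nat)
    (y z : phase) :
  0 < phis < PI / 2 -> 1 <= Rb ->
  ph_arc (o 0%nat) = Arc_r ->
  (forall k : nat, (k < n0 + n1 + 2)%nat -> bstep phis Rb (o k) (o (S k))) ->
  ph_arc (o n0) = Arc_r -> ph_arc (o (S n0)) = Arc_R ->
  (forall k : nat, (k < n0)%nat ->
     ~ (ph_arc (o k) = Arc_r /\ ph_arc (o (S k)) = Arc_R)) ->
  ph_arc (o (n0 + 1 + n1)%nat) = Arc_R -> ph_arc (o (n0 + n1 + 2)%nat) = Arc_r ->
  (forall k : nat, (k < n1)%nat ->
     ~ (ph_arc (o (n0 + 1 + k)%nat) = Arc_R /\ ph_arc (o (n0 + 2 + k)%nat) = Arc_r)) ->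
  (1 <= n1)%nat ->
  bstep phis Rb y (o n0) -> ph_arc y = Arc_r ->
  bstep phis Rb (o (n0 + n1 + 2)%nat) z -> ph_arc z = Arc_r ->
  let tau0 := edist (bpos phis Rb (o n0)) (bpos phis Rb (o (n0 + 1)%nat)) in
  let tau1 := edist (bpos phis Rb (o (n0 + 1 + n1)%nat)) (bpos phis Rb (o (n0 + n1 + 2)%nat)) in
  let p := INR n1 / (INR n1 + 1) in
  let d0 := dfun Rb (o n0) in
  let d1 := dfun Rb (o (n0 + 1)%nat) in
  let d2 := dfun Rb (o (n0 + n1 + 2)%nat) in
  tau0 < 2 / 3 * d0 + p * d1 ->
  tau1 < p * d1 + 2 / 3 * d2 ->
  pos_defocusing phis Rb (orbit_seg y o n0 n1 z) 0 (n1 + 4).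
Proof.
  intros Hphi HR Ho0 Hstep Ha0 Ha1 Hmin0 HaR Ha2 Hmin1 Hn1 Hy Hyr Hz Hzr
    tau0 tau1 p d0 d1 d2 H0 H1.
  set (s := orbit_seg y o n0 n1 z).
  assert (s0 : s 0%nat = y) by reflexivity.
  assert (sS : forall j, (j <= n1 + 2)%nat -> s (S j) = o (n0 + j)%nat).
  { intros j hj. unfold s, orbit_seg.
    replace (j <=? n1 + 2)%nat with true; [reflexivity | symmetry; apply Nat.leb_le; lia]. }
  assert (sz : s (S (S (S (S n1)))) = z).
  { unfold s, orbit_seg.
    replace (S (S (S n1)) <=? n1 + 2)%nat with false; [reflexivity | symmetry; apply Nat.leb_gt; lia]. }
  assert (arcR : forall k, (k <= n1)%nat -> ph_arc (o (n0 + 1 + k)%nat) = Arc_R).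
  { induction k as [|k IH]; intros hk.
    - rewrite Nat.add_0_r, Nat.add_1_r. exact Ha1.
    - assert (h := IH ltac:(lia)).
      destruct (ph_arc (o (n0 + 1 + S k)%nat)) eqn:E; [|reflexivity].
      exfalso. apply (Hmin1 k ltac:(lia)). split; [exact h|].
      replace (n0 + 2 + k)%nat with (n0 + 1 + S k)%nat by lia. exact E. }
  assert (dR : forall k, (k <= n1)%nat -> dfun Rb (o (n0 + 1 + k)%nat) = d1
     /\ (k < n1 -> DF phis Rb (o (n0 + 1 + k)%nat) (o (S (n0 + 1 + k))) = mkMat2 1 2 0 1)%nat).
  { induction k as [|k IH]; intros hk.
    - split; [unfold d1; rewrite Nat.add_0_r; reflexivity|].
      intros hk'. apply (same_arc phis Rb _ _ HR); [apply Hstep; lia|].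
      rewrite arcR by lia. replace (S (n0 + 1 + 0)) with (n0 + 1 + 1)%nat by lia.
      rewrite arcR by lia. reflexivity.
    - destruct (IH ltac:(lia)) as [IH1 IH2].
      assert (hb : bstep phis Rb (o (n0 + 1 + k)%nat) (o (S (n0 + 1 + k)))) by (apply Hstep; lia).
      assert (ha : ph_arc (o (n0 + 1 + k)%nat) = ph_arc (o (S (n0 + 1 + k)))).
      { rewrite arcR by lia. replace (S (n0 + 1 + k)) with (n0 + 1 + S k)%nat by lia.
        rewrite arcR by lia. reflexivity. }
      destruct (same_arc phis Rb _ _ HR hb ha) as [_ hd].
      split.
      + replace (n0 + 1 + S k)%nat with (S (n0 + 1 + k)) by lia. rewrite hd; exact IH1.
      + intros hk'. apply (same_arc phis Rb _ _ HR); [apply Hstep; lia|].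
        rewrite arcR by lia. replace (S (n0 + 1 + S k)) with (n0 + 1 + S (S k))%nat by lia.
        rewrite arcR by lia. reflexivity. }
  set (P := Dseg phis Rb s 0 2).
  assert (HD : forall k, (k <= n1)%nat -> Dseg phis Rb s 0 (S (S k)) =
     mkMat2 (m11 P + 2 * INR k * m21 P) (m12 P + 2 * INR k * m22 P) (m21 P) (m22 P)).
  { induction k as [|k IH]; intros hk.
    - unfold P. destruct (Dseg phis Rb s 0 2); simpl; f_equal; ring.
    - rewrite Dseg_S, IH by lia.
      replace (s (0 + S (S k))%nat) with (o (n0 + 1 + k)%nat)
        by (cbn [Nat.add]; rewrite sS by lia; f_equal; lia).
      replace (s (S (0 + S (S k)))) with (o (S (n0 + 1 + k)))
        by (cbn [Nat.add]; rewrite sS by lia; f_equal; lia).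
      rewrite (proj2 (dR k ltac:(lia))) by lia.
      unfold mat2_mul; cbn [m11 m12 m21 m22]. rewrite S_INR. f_equal; ring. }
  assert (hd0 : 0 < d0) by (apply (dfun_pos phis); auto; apply Hy).
  assert (hd1 : 0 < d1).
  { unfold d1. rewrite Nat.add_1_r. apply (dfun_pos phis); auto. apply (Hstep n0); lia. }
  assert (hd2 : 0 < d2) by (apply (dfun_pos phis); auto; apply Hz).
  assert (hn : 1 <= INR n1) by (apply le_INR in Hn1; simpl in Hn1; exact Hn1).
  assert (HP : P = mat2_mul (mkMat2 ((tau0-d0)/d1) (tau0/d1) ((tau0-d0-d1)/d1) ((tau0-d1)/d1))
                     (mat2_mul (mkMat2 1 2 0 1) mat2_id)).
  { unfold P. change (Dseg phis Rb s 0 2) with (mat2_mul (DF phis Rb (s 1%nat) (s 2%nat))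
        (mat2_mul (DF phis Rb (s 0%nat) (s 1%nat)) mat2_id)).
    rewrite s0, (sS 0%nat), (sS 1%nat) by lia. rewrite Nat.add_0_r.
    rewrite (proj1 (same_arc phis Rb _ _ HR Hy ltac:(rewrite Hyr, Ha0; reflexivity))).
    reflexivity. }
  assert (HB2 : DF phis Rb (o (n0 + 1 + n1)%nat) (o (n0 + n1 + 2)%nat) =
     mkMat2 ((tau1-d1)/d2) (tau1/d2) ((tau1-d1-d2)/d2) ((tau1-d2)/d2)).
  { unfold DF. rewrite (proj1 (dR n1 ltac:(lia))). reflexivity. }
  assert (HB3 : DF phis Rb (o (n0 + n1 + 2)%nat) z = mkMat2 1 2 0 1).
  { apply (same_arc phis Rb _ _ HR Hz). rewrite Ha2, Hzr; reflexivity. }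
  unfold pos_defocusing. rewrite Nat.sub_0_r.
  replace (n1 + 4)%nat with (S (S (S (S n1)))) by lia.
  rewrite Dseg_S, Dseg_S, HD by lia.
  replace (s (0 + S (S (S n1)))%nat) with (o (n0 + n1 + 2)%nat)
    by (cbn [Nat.add]; rewrite sS by lia; f_equal; lia).
  replace (s (S (0 + S (S (S n1))))%nat) with z by (cbn [Nat.add]; rewrite sz; reflexivity).
  replace (s (0 + S (S n1))%nat) with (o (n0 + 1 + n1)%nat)
    by (cbn [Nat.add]; rewrite sS by lia; f_equal; lia).
  replace (s (S (0 + S (S n1)))%nat) with (o (n0 + n1 + 2)%nat)
    by (cbn [Nat.add]; rewrite sS by lia; f_equal; lia).
  rewrite HB3, HB2, HP.
  exact (alg d0 d1 d2 tau0 tau1 (INR n1) hd0 hd1 hd2 hn H0 H1).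
Qed.
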